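(* Let $S=\{0,a,b\}\subseteq\mathbb{Z}$ with $a,b>0$, $a$ even and $b$ odd. Let $\chi$ be the alternating block 4-coloring of $\mathbb{Z}$ relative to $S$. Then every translate $n+S=\{n,n+a,n+b\}$, $n\in\mathbb{Z}$, contains elements of three different colors under $\chi$.
   Context: The alternating block 4-coloring relative to $S=\{0,a,b\}$ is defined as follows. For $m\in\mathbb{Z}$, let $q_m,r_m$ be the unique integers with $m=2aq_m+r_m$ and $-a\le r_m<a$. Let $X(m)=0$ if $r_m\ge0$ and $X(m)=1$ otherwise; let $Y(m)=0$ if $m$ is even and $Y(m)=1$ otherwise. Then $\chi(m)=(X(m),Y(m))$, a coloring with four colors. *)

(* Defs.v *)
From Stdlib Require Import ZArith Lia.
Open Scope Z_scope.

Definition blk_rem (a m : Z) : Z := (m + a) mod (2 * a) - a.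
Definition blk_quot (a m : Z) : Z := (m + a) / (2 * a).

Lemma blk_spec (a m : Z) : 0 < a ->
  m = 2 * a * blk_quot a m + blk_rem a m /\ - a <= blk_rem a m < a.
Proof.
  intro Ha. unfold blk_rem, blk_quot.
  pose proof (Z.div_mod (m + a) (2 * a) ltac:(lia)).
  pose proof (Z.mod_pos_bound (m + a) (2 * a) ltac:(lia)). lia.
Qed.

Definition X (a m : Z) : Z := if 0 <=? blk_rem a m then 0 else 1.
Definition Y (m : Z) : Z := if Z.even m then 0 else 1.

Definition chi (a m : Z) : Z * Z := (X a m, Y m).

(* Main.v *)
Require Import Defs.
From Stdlib Require Import ZArith Lia.
Open Scope Z_scope.

Lemma Xflip a n : 0 < a -> X a n <> X a (n + a).
Proof.
  intros Ha. unfold X.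
  destruct (blk_spec a n Ha) as [E1 B1].
  destruct (blk_spec a (n + a) Ha) as [E2 B2].
  set (q1 := blk_quot a n) in *. set (q2 := blk_quot a (n+a)) in *.
  set (r1 := blk_rem a n) in *. set (r2 := blk_rem a (n+a)) in *.
  assert (H : a = 2 * a * (q2 - q1) + (r2 - r1)) by lia.
  destruct (0 <=? r1) eqn:H1; destruct (0 <=? r2) eqn:H2;
    try (intro; discriminate); exfalso;
  apply Z.leb_le in H1 || apply Z.leb_gt in H1;
  apply Z.leb_le in H2 || apply Z.leb_gt in H2;
  assert (q2 - q1 <= 0 \/ q2 - q1 >= 1) by lia; nia.
Qed.

Theorem mainTheorem20 (a b : Z) (ha : 0 < a) (hb : 0 < b)
  (ha_even : Z.even a = true) (hb_odd : Z.odd b = true) :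
  forall n : Z,
    chi a n <> chi a (n + a) /\
    chi a n <> chi a (n + b) /\
    chi a (n + a) <> chi a (n + b).
Proof.
  intro n. unfold chi.
  assert (Hb : Z.even b = false) by (rewrite <- Z.negb_odd, hb_odd; reflexivity).
  unfold Y. rewrite !Z.even_add, ha_even, Hb.
  split; [|split]; intro H; injection H; intros.
  - exact (Xflip a n ha H1).
  - destruct (Z.even n); simpl in *; discriminate.
  - destruct (Z.even n); simpl in *; discriminate.
Qed.
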